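(* Let $k\ge2$ be an even integer. In the maximum-cardinality online matching problem under edge arrivals with a hard budget of $k$ reassignments per arrival (defined in the context), the shortest-augmenting-path algorithm described in the context is $(1-\frac{2}{k+2})$-competitive: on every instance, the matching it outputs has cardinality at least $(1-\frac{2}{k+2})\cdot\mathsf{OPT}$, where $\mathsf{OPT}$ is the maximum cardinality of a matching in the revealed graph.
   Context: Problem: $G=(V,E)$ is a graph, not necessarily bipartite. The algorithm initially knows $V$ and $k$. Over $|E|$ timesteps the edges of $G$ are revealed one at a time. At the end of each timestep the algorithm must output a matching in the graph revealed so far. The new matching $M_2$ must be obtainable from the previous matching $M_1$ (empty before the first timestep) by at most $k$ (re)assignments, the number of (re)assignments being the number of vertices of nonzero degree in $M_1\triangle M_2$; once a vertex is matched it must remain matched at all later timesteps. An augmenting path with respect to a matching $M$ is a path between two distinct vertices not covered by $M$ whose edges alternate between edges not in $M$ and edges in $M$; its length is its number of edges. Algorithm: when an edge $e$ arrives, among all augmenting paths in the current graph with respect to the current matching $M$ that contain $e$, choose a shortest one $P$; if none exists or its length exceeds $k-1$, keep $M$; otherwise output $M\triangle P$. *)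

(* Defs.v *)
From mathcomp Require Import all_boot all_order all_algebra.
Set Implicit Arguments. Unset Strict Implicit. Unset Printing Implicit Defensive.

Section Online.
Variable V : finType.

(* Edges are 2-element subsets of V; a graph is given by its edge set. *)
Definition is_matching (G M : {set {set V}}) : bool :=
  (M \subset G) &&
  [forall f in M, forall g in M, (f != g) ==> [disjoint f & g]].

Definition OPT (G : {set {set V}}) : nat :=
  \max_(M : {set {set V}} | is_matching G M) #|M|.

Definition covered (M : {set {set V}}) (v : V) : bool := [exists f in M, v \in f].

Definition pedges (p : seq V) : seq {set V} :=
  [seq [set x.1; x.2] | x <- zip p (behead p)].

Definition plen (p : seq V) : nat := (size p).-1.

Definition is_path (G : {set {set V}}) (p : seq V) : Prop :=
  [/\ 2 <= size p, uniq p & all (fun f => f \in G) (pedges p)].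

(* augmenting path: a path between two distinct uncovered vertices whose
   edges alternate non-matching / matching (starting and ending with a
   non-matching edge, forced by the endpoints being uncovered). *)
Definition augmenting (G M : {set {set V}}) (p : seq V) : Prop :=
  [/\ is_path G p,
      (match p with x :: q => ~~ covered M x && ~~ covered M (last x q)
                  | [::] => false end) &
      forall i, i < size (pedges p) -> (nth set0 (pedges p) i \in M) = odd i].

Definition symdiff (M : {set {set V}}) (p : seq V) : {set {set V}} :=
  let E := [set f in pedges p] in (M :\: E) :|: (E :\: M).

(* One step of the algorithm: G is the revealed graph (including e),
   M the current matching, M' the output. Any shortest augmenting path
   containing e may be chosen. *)
Definition alg_step (k : nat) (G M : {set {set V}}) (e : {set V})
    (M' : {set {set V}}) : Prop :=
  ((exists p, [/\ augmenting G M p, e \in pedges p & plen p <= k - 1]) ->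
     exists p, [/\ augmenting G M p, e \in pedges p,
                (forall q, augmenting G M q -> e \in pedges q -> plen p <= plen q)
              & M' = symdiff M p])
  /\
  (~ (exists p, [/\ augmenting G M p, e \in pedges p & plen p <= k - 1]) ->
     M' = M).

Inductive alg_run (k : nat) : seq {set V} -> {set {set V}} -> Prop :=
| run_nil : alg_run k [::] set0
| run_snoc es e M M' :
    alg_run k es M -> alg_step k [set f in rcons es e] M e M' ->
    alg_run k (rcons es e) M'.

End Online.

(* Main.v *)
Require Import Defs.
From mathcomp Require Import all_boot all_order all_algebra.
From mathcomp Require Import zify ring.
From Stdlib Require Import Classical_Prop.
Set Implicit Arguments. Unset Strict Implicit. Unset Printing Implicit Defensive.


Section S.
Variable V : finType.
Implicit Types (A B M N G : {set {set V}}) (r p q : seq V).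

Definition mat A := forall f g (v : V), f \in A -> g \in A -> v \in f -> v \in g -> f = g.
Definition symd A B := (A :\: B) :|: (B :\: A).
Definition es p := [set f in pedges p].
Fixpoint altE A b (s : seq {set V}) :=
  if s is f :: s' then ((f \in A) == b) && altE A (~~ b) s' else true.

Lemma pedges_cons (z z' : V) q : pedges (z :: z' :: q) = [set z; z'] :: pedges (z' :: q).
Proof. by []. Qed.

Lemma pedges1 (z : V) : pedges [:: z] = [::].
Proof. by []. Qed.

Lemma size_pedges p : size (pedges p) = (size p).-1.
Proof.
rewrite /pedges size_map size_zip size_behead; case: (size p) => // n.
by rewrite /= minnE subSnn subn1.
Qed.

Lemma pedges_sub p f (v : V) : f \in pedges p -> v \in f -> v \in p.
Proof.
elim: p => [|z [|z' q] IH] //=.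
rewrite -/(pedges (z' :: q)) inE => /orP [/eqP -> | /IH H].
  by rewrite !inE => /orP [] /eqP ->; rewrite eqxx ?orbT.
by move/H => vq; rewrite inE vq orbT.
Qed.

Lemma uniq_pedges p : uniq p -> uniq (pedges p).
Proof.
elim: p => [|z [|z' q] IH] //= /andP [zq uq].
rewrite -/(pedges (z' :: q)) IH // andbT.
apply/negP => /(pedges_sub (v := z)); rewrite !inE eqxx => /(_ isT) H.
by move: zq; rewrite inE H.
Qed.

Lemma head_edge (z z' : V) q f : uniq (z :: z' :: q) -> f \in pedges (z :: z' :: q) ->
  z \in f -> f = [set z; z'].
Proof.
rewrite pedges_cons inE => /andP [zq _] /orP [/eqP -> //| H] zf.
by move: (pedges_sub H zf); rewrite (negbTE zq).
Qed.

Lemma altE_nth A b s :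
  altE A b s <-> (forall i, i < size s -> (nth set0 s i \in A) = b (+) odd i).
Proof.
elim: s b => [|f s IH] b /=; first by split.
split.
  move=> /andP [/eqP fA /IH H] [|i] /=; first by rewrite fA addbF.
  by rewrite ltnS => /H ->; case: b {H fA}; case: (odd i).
move=> H; apply/andP; split.
  by rewrite (H 0) // addbF.
apply/IH => i lt; have := H i.+1 lt; rewrite /= => ->.
by case: b {H}; case: (odd i).
Qed.

Lemma last_edge (z : V) r : r != [::] ->
  last z r \in nth set0 (pedges (z :: r)) (size r).-1.
Proof.
elim: r z => [|z' [|z'' q] IH] z //= _.
  by rewrite !inE eqxx orbT.
by have := IH z' isT.
Qed.

Lemma count_altE A b s : altE A b s ->
  count (mem A) s = if b then uphalf (size s) else (size s)./2.
Proof.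
elim: s b => [|f s IH] b /=; first by case: b.
case/andP => /eqP fA /IH ->; rewrite fA.
by case: b {fA} => /=; rewrite ?uphalfE ?add0n ?add1n.
Qed.

End S.


Section S.
Variable V : finType.
Implicit Types (A B M N G : {set {set V}}) (r p q : seq V).

Lemma matP G A : is_matching G A <-> A \subset G /\ mat A.
Proof.
rewrite /is_matching; split.
  case/andP => -> /forallP H; split => // f g v fA gA vf vg.
  apply/eqP/negPn/negP => fg.
  have := H f; rewrite fA /= => /forallP /(_ g); rewrite gA fg /= -setI_eq0.
  by move/eqP/setP/(_ v); rewrite !inE vf vg.
case=> -> H; apply/forallP => f; apply/implyP => fA; apply/forallP => g.
apply/implyP => gA; apply/implyP => fg; rewrite -setI_eq0; apply/eqP/setP => v.
rewrite !inE; apply/negP => /andP [vf vg].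
by move: fg; rewrite (H f g v fA gA vf vg) eqxx.
Qed.

Lemma memS A (z z' : V) q f : uniq (z :: z' :: q) ->
  (f \in symd A (es (z :: z' :: q))) =
  if f == [set z; z'] then [set z; z'] \notin A else f \in symd A (es (z' :: q)).
Proof.
move=> /andP [zq _].
have e0n : [set z; z'] \notin pedges (z' :: q).
  apply/negP => /(pedges_sub (v := z)); rewrite !inE eqxx => /(_ isT) H.
  by move: zq; rewrite inE H.
rewrite /symd /es pedges_cons !inE.
case: eqP => [->|_] /=; last by []. move: e0n; case: ([set z; z'] \in pedges _) => // _; by case: ([set z; z'] \in A).
Qed.

Lemma swap_core A (matA : mat A) (z z' : V) q b :
  uniq (z :: z' :: q) -> ([set z; z'] \in A) = b ->
  (forall f g v, f \in symd A (es (z' :: q)) -> g \in symd A (es (z' :: q)) ->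
     f != g -> v \in f -> v \in g -> v = z') ->
  (forall f, f \in symd A (es (z' :: q)) -> z' \in f -> b) ->
  (forall f g, f \in symd A (es (z' :: q)) -> g \in symd A (es (z' :: q)) ->
     z' \in f -> z' \in g -> f != [set z; z'] -> g != [set z; z'] -> f = g) ->
  let S := symd A (es (z :: z' :: q)) in
  (forall f g v, f \in S -> g \in S -> f != g -> v \in f -> v \in g -> v = z) /\
  (forall f, f \in S -> z \in f -> ~~ b /\ (f = [set z; z'] \/ f \in A)).
Proof.
move=> u e0b Hi Hb Hu S.
have zz' : z != z'.
  by move: u; rewrite /= inE negb_or => /andP [/andP [] ].
have notE : forall f : {set V}, z \in f -> f \notin es (z' :: q).
  move=> f zf; rewrite /es inE; apply/negP => /pedges_sub /(_ zf) zq.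
  by move: u => /andP []; rewrite zq.
have v_e0 : forall v : V, v \in [set z; z'] -> v != z -> v = z'.
  by move=> v; rewrite !inE => /orP [] /eqP -> //; rewrite eqxx.
split.
  move=> f g v; rewrite /S !(memS _ _ u).
  case: (eqVneq f [set z; z']) => [->|fe0]; case: (eqVneq g [set z; z']) => [->|ge0].
  - by [].
  - move=> e0A gS _ ve0 vg; apply/eqP/negPn/negP => vz.
    have := Hb g gS; rewrite -(v_e0 v ve0 vz) vg => /(_ isT) bt.
    by move: e0A; rewrite e0b bt.
  - move=> fS e0A _ vf ve0; apply/eqP/negPn/negP => vz.
    have := Hb f fS; rewrite -(v_e0 v ve0 vz) vf => /(_ isT) bt.
    by move: e0A; rewrite e0b bt.
  - move=> fS gS fg vf vg; apply/eqP/negPn/negP => vz.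
    have vz' := Hi f g v fS gS fg vf vg; subst v.
    by move: fg; rewrite (Hu f g fS gS vf vg fe0 ge0) eqxx.
move=> f; rewrite /S (memS _ _ u).
case: (eqVneq f [set z; z']) => [->|fe0].
  by rewrite e0b => nb _; split => //; left.
move=> fS zf; have fA : f \in A.
  move: fS (notE f zf); rewrite /symd in_setU !in_setD.
  by case: (f \in A); case: (f \in es _).
split; last by right.
apply/negP => bt; move: e0b; rewrite bt => e0A.
move: fe0; rewrite (matA f [set z; z'] z fA e0A zf) ?eqxx //.
by rewrite !inE eqxx.
Qed.

Lemma swap_exc A (matA : mat A) q : forall (z z' : V) b,
  uniq (z :: z' :: q) -> altE A b (pedges (z :: z' :: q)) ->
  (forall f, f \in A -> last z' q \in f -> f \in pedges (z :: z' :: q)) ->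
  let S := symd A (es (z :: z' :: q)) in
  (forall f g v, f \in S -> g \in S -> f != g -> v \in f -> v \in g -> v = z) /\
  (forall f, f \in S -> z \in f -> ~~ b /\ (f = [set z; z'] \/ f \in A)).
Proof.
elim: q => [|z'' q IH] z z' b u alt lastc.
  have e0b : ([set z; z'] \in A) = b by move: alt => /= /andP [/eqP].
  have SA : symd A (es [:: z']) = A.
    by apply/setP => f; rewrite /symd /es !inE /=; case: (f \in A).
  apply: swap_core => //; rewrite SA.
  - by move=> f g v fA gA fg vf vg; move: fg; rewrite (matA f g v) ?eqxx.
  - move=> f fA zf; have := lastc f fA zf; rewrite /= inE => /eqP fe.
    by rewrite -e0b -fe.
  - move=> f g fA _ zf _ fe; have := lastc f fA zf; rewrite /= inE => fe'.
    by rewrite fe' in fe.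
have e0b : ([set z; z'] \in A) = b by move: alt; rewrite pedges_cons /= => /andP [/eqP].
have alt' : altE A (~~ b) (pedges (z' :: z'' :: q)).
  by move: alt; rewrite pedges_cons /= => /andP [_].
have u' : uniq (z' :: z'' :: q) by move: u => /andP [].
have lastc' : forall f, f \in A -> last z'' q \in f -> f \in pedges (z' :: z'' :: q).
  move=> f fA lf; have := lastc f fA lf; rewrite pedges_cons inE.
  case/orP => [/eqP fe|//]; exfalso.
  have lz : last z'' q \in z'' :: q by apply: mem_last.
  move: lf; rewrite fe !inE => /orP [] /eqP lz'.
    move: u => /andP [zq _]; move: zq; rewrite -{1}lz' => /negP; apply.
    by rewrite in_cons lz orbT.
  by move: u' => /andP []; rewrite -lz' lz.
have [Hi Hii] := IH z' z'' (~~ b) u' alt' lastc'.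
apply: swap_core => //.
- move=> f fS zf; by have [/negPn -> _] := Hii f fS zf.
- move=> f g fS gS zf zg fe ge.
  have [bt [fe1|fA]] := Hii f fS zf; have [_ [ge1|gA]] := Hii g gS zg.
  + by rewrite fe1 ge1.
  + move/negPn: bt => bt; move: e0b; rewrite bt => e0A.
    by move: ge; rewrite (matA g [set z; z'] z' gA e0A zg) ?eqxx // !inE eqxx orbT.
  + move/negPn: bt => bt; move: e0b; rewrite bt => e0A.
    by move: fe; rewrite (matA f [set z; z'] z' fA e0A zf) ?eqxx // !inE eqxx orbT.
  + move/negPn: bt => bt; move: e0b; rewrite bt => e0A.
    by move: fe; rewrite (matA f [set z; z'] z' fA e0A zf) ?eqxx // !inE eqxx orbT.
Qed.

End S.


Section S.
Variable V : finType.
Implicit Types (A B M N G : {set {set V}}) (r p q : seq V).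

Lemma swap_mat A (matA : mat A) (z z' : V) q b :
  uniq (z :: z' :: q) -> altE A b (pedges (z :: z' :: q)) ->
  (forall f, f \in A -> last z' q \in f -> f \in pedges (z :: z' :: q)) ->
  b || ~~ covered A z -> mat (symd A (es (z :: z' :: q))).
Proof.
move=> u alt lastc hc f g v fS gS vf vg.
have [Hi Hii] := swap_exc matA u alt lastc.
case: (eqVneq f g) => // fg.
have vz := Hi f g v fS gS fg vf vg; subst v.
have [nb [fe|fA]] := Hii f fS vf; have [_ [ge|gA]] := Hii g gS vg.
- by rewrite fe ge.
- by move: hc; rewrite (negbTE nb) /= /covered => /existsP []; exists g; rewrite gA vg.
- by move: hc; rewrite (negbTE nb) /= /covered => /existsP []; exists f; rewrite fA vf.
- by move: hc; rewrite (negbTE nb) /= /covered => /existsP []; exists f; rewrite fA vf.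
Qed.

Lemma card_symd A (s : seq {set V}) : uniq s ->
  #|symd A [set f in s]| + count (mem A) s = #|A| + count (predC (mem A)) s.
Proof.
move=> us.
have cI : #|A :&: [set f in s]| = count (mem A) s.
  rewrite -size_filter; have /card_uniqP <- := filter_uniq (mem A) us.
  by apply: eq_card => f; rewrite !inE mem_filter andbC.
have cD : #|[set f in s] :\: A| = count (predC (mem A)) s.
  rewrite -size_filter; have /card_uniqP <- := filter_uniq (predC (mem A)) us.
  by apply: eq_card => f; rewrite !inE mem_filter andbC.
have c0 : (A :\: [set f in s]) :&: ([set f in s] :\: A) = set0.
  by apply/setP => f; rewrite !inE; case: (f \in A); rewrite ?andbF.
rewrite /symd cardsU c0 cards0 subn0 cardsD cI cD.
have : count (mem A) s <= #|A| by rewrite -cI subset_leq_card // subsetIl.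
move=> h; rewrite addnAC subnK //.
Qed.

Lemma covered_nin A (v : V) (f : {set V}) : ~~ covered A v -> f \in A -> v \notin f.
Proof. by move=> /existsP H fA; apply/negP => vf; apply: H; exists f; rewrite fA. Qed.

End S.


Section S.
Variable V : finType.
Implicit Types (A B M N G : {set {set V}}) (r p q : seq V).

Lemma aug_inv G M p : augmenting G M p ->
  exists z z' q, p = z :: z' :: q /\ [/\ uniq p, {subset pedges p <= G},
     ~~ covered M z, ~~ covered M (last z' q) & altE M false (pedges p)].
Proof.
case=> [[sp up /allP ap] ends alt].
case: p sp up ap ends alt => [|z [|z' q]] // _ up ap ends alt.
exists z, z', q; split => //; split => //.
- by case/andP: ends.
- by case/andP: ends.
by apply/altE_nth => i /alt ->.
Qed.

Lemma mk_aug G M (z z' : V) q : uniq (z :: z' :: q) -> {subset pedges (z :: z' :: q) <= G} ->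
  ~~ covered M z -> ~~ covered M (last z' q) -> altE M false (pedges (z :: z' :: q)) ->
  augmenting G M (z :: z' :: q).
Proof.
move=> u sub c1 c2 /altE_nth alt; split.
- by split => //; apply/allP.
- by rewrite /= c1 c2.
by move=> i /alt.
Qed.

Lemma nin_covered A (v : V) (f : {set V}) : ~~ covered A v -> v \in f -> f \notin A.
Proof. by move=> c vf; apply/negP => fA; move: (covered_nin c fA); rewrite vf. Qed.

Lemma aug_mono G G' M p : augmenting G M p -> {subset pedges p <= G'} -> augmenting G' M p.
Proof. by case=> [[sp up ap] ends alt] sub; split => //; split => //; apply/allP. Qed.

Lemma aug_sub G M p : augmenting G M p -> {subset pedges p <= G}.
Proof. by case=> [[_ _ /allP]]. Qed.

Lemma two_other (f : {set V}) (z : V) : #|f| == 2 -> z \in f ->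
  exists2 w, w != z & f = [set z; w].
Proof.
move=> /cards2P [x [y [xy ->]]]; rewrite !inE => /orP [] /eqP ->.
  by exists y; rewrite // eq_sym.
by exists x => //; rewrite setUC.
Qed.

Lemma altE_flip M N (D : {set {set V}}) b (s : seq {set V}) :
  (forall f : {set V}, f \in D -> (f \in N) = ~~ (f \in M)) ->
  {subset s <= D} -> altE M b s -> altE N (~~ b) s.
Proof.
move=> HD; elim: s b => [|f s IH] b //= sub /andP [/eqP fM alt].
rewrite HD ?fM ?eqxx /=; last by apply: sub; rewrite inE eqxx.
by apply: IH => // g gs; apply: sub; rewrite inE gs orbT.
Qed.

Section Walk.
Variables M N : {set {set V}}.
Hypothesis matM : mat M.
Hypothesis matN : mat N.
Let D := symd M N.

Lemma inD_N f : f \in D -> f \notin M -> f \in N.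
Proof. by rewrite /D /symd !inE; case: (f \in M); case: (f \in N). Qed.

Lemma inD_M f : f \in D -> f \in M -> f \notin N.
Proof. by rewrite /D /symd !inE; case: (f \in M); case: (f \in N). Qed.

Definition Wk b (z : V) r := [/\ r != [::], uniq (z :: r), {subset pedges (z :: r) <= D},
  ~~ covered M (last z r) & altE M b (pedges (z :: r))].

Lemma Wk_tail b (z z' z'' : V) q : Wk b z (z' :: z'' :: q) -> Wk (~~ b) z' (z'' :: q).
Proof.
case=> _ u sub c alt; split => //.
- by case/andP: u.
- by move=> f fi; apply: sub; rewrite pedges_cons inE fi orbT.
by move: alt; rewrite pedges_cons /= => /andP [].
Qed.

Lemma incid q : forall b (z z' : V), Wk b z (z' :: q) ->
  forall v g, v \in z' :: q -> g \in D -> v \in g -> g \in pedges (z :: z' :: q).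
Proof.
elim: q => [|z'' q IH] b z z' W v g.
  rewrite inE => /eqP -> gD z'g.
  case: W => _ u sub c alt.
  have e0D : [set z; z'] \in D by apply: sub; rewrite inE eqxx.
  have gN : g \in N by apply: inD_N => //; apply: nin_covered c _.
  have e0N : [set z; z'] \in N.
    by apply: inD_N => //; apply: nin_covered c _; rewrite !inE eqxx orbT.
  rewrite (matN gN e0N z'g); first by rewrite /= inE eqxx.
  by rewrite !inE eqxx orbT.
rewrite in_cons => /orP [/eqP ->|vin] gD vg; last first.
  by rewrite pedges_cons inE (IH _ _ _ (Wk_tail W) v g vin gD vg) orbT.
case: W => _ u sub c alt.
have e0D : [set z; z'] \in D by apply: sub; rewrite inE eqxx.
have e1D : [set z'; z''] \in D by apply: sub; rewrite pedges_cons inE pedges_cons inE eqxx orbT.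
move: alt; rewrite !pedges_cons /= => /andP [/eqP e0b /andP [/eqP e1b _]].
have z'e0 : z' \in [set z; z'] by rewrite !inE eqxx orbT.
have z'e1 : z' \in [set z'; z''] by rewrite !inE eqxx.
have in0 : [set z; z'] \in pedges [:: z, z', z'' & q] by rewrite pedges_cons inE eqxx.
have in1 : [set z'; z''] \in pedges [:: z, z', z'' & q].
  by rewrite pedges_cons inE pedges_cons inE eqxx orbT.
case gM : (g \in M).
  case: b e0b e1b => e0b e1b.
    by rewrite (matM gM e0b vg z'e0).
  by rewrite (matM gM e1b vg z'e1).
have gN : g \in N by apply: inD_N; rewrite ?gM.
case: b e0b e1b => e0b e1b.
  have e1N : [set z'; z''] \in N by apply: inD_N; rewrite ?e1b.
  by rewrite (matN gN e1N vg z'e1).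
have e0N : [set z; z'] \in N by apply: inD_N; rewrite ?e0b.
by rewrite (matN gN e0N vg z'e0).
Qed.

Lemma Wk_ext b (z w : V) r : Wk b z r -> w != z -> [set z; w] \in D ->
  ([set z; w] \in M) = ~~ b -> Wk (~~ b) w (z :: r).
Proof.
move=> W wz eD eM.
have ezw : [set w; z] = [set z; w] by rewrite setUC.
case: W => rn u sub c alt.
have wn : w \notin z :: r.
  rewrite in_cons (negbTE wz) /=; apply/negP => wr.
  case: r rn u sub c alt wr => [|z' q] // rn u sub c alt wr.
  have W' : Wk b z (z' :: q) by [].
  have := incid W' wr eD; rewrite !inE eqxx orbT => /(_ isT) /(head_edge u).
  rewrite !inE eqxx => /(_ isT) e.
  by move: alt; rewrite pedges_cons /= -e eM => /andP [/eqP]; case: b {W' eM}.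
split => //.
- by rewrite /= wn.
- move=> f; rewrite pedges_cons inE => /orP [/eqP ->|]; first by rewrite ezw.
  exact: sub.
rewrite pedges_cons /= ezw eM eqxx negbK.
by [].
Qed.

Lemma maxwalk n : forall b (z : V) r, Wk b z r -> #|V| - size r <= n ->
  exists b2 z2 r2, Wk b2 z2 r2 /\
    (forall w, w != z2 -> [set z2; w] \in D -> ([set z2; w] \in M) = b2).
Proof.
elim: n => [|n IH] b z r W hn.
  case: (boolP [exists w, (w != z) && ([set z; w] \in D) && (([set z; w] \in M) == ~~ b)]).
    case/existsP => w /andP [/andP [wz eD] /eqP eM].
    have [_ u _ _ _] := Wk_ext W wz eD eM.
    have h : size (w :: z :: r) <= #|V| by move/card_uniqP: u => <-; apply: max_card.
    exfalso; move: hn h => /=; lia.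
  move=> /existsPn H; exists b, z, r; split => // w wz eD.
  have := H w; rewrite wz eD /=; by case: (_ \in M); case: b {W H}.
case: (boolP [exists w, (w != z) && ([set z; w] \in D) && (([set z; w] \in M) == ~~ b)]).
  case/existsP => w /andP [/andP [wz eD] /eqP eM].
  have W' := Wk_ext W wz eD eM.
  apply: (IH _ _ _ W'); rewrite /=.
  have [_ u _ _ _] := W'.
  have h : size (w :: z :: r) <= #|V| by move/card_uniqP: u => <-; apply: max_card.
  move: hn h => /=; lia.
move=> /existsPn H; exists b, z, r; split => // w wz eD.
have := H w; rewrite wz eD /=; by case: (_ \in M); case: b {W H}.
Qed.

End Walk.
End S.


Section S.
Variable V : finType.
Implicit Types (A B M N G : {set {set V}}) (r p q : seq V).

Lemma trivI_mat A : mat A -> trivIset A.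
Proof.
move=> mA; apply/trivIsetP => B C BA CA BC; rewrite -setI_eq0; apply/eqP/setP => v.
rewrite !inE; apply/negP => /andP [vB vC].
by move: BC; rewrite (mA B C v BA CA vB vC) eqxx.
Qed.

Lemma sum2 A : (forall f, f \in A -> #|f| == 2) -> \sum_(B in A) #|B| = #|A| * 2.
Proof.
move=> tw; rewrite -sum_nat_const; apply: eq_bigr => B /tw /eqP //.
Qed.

Lemma exists_aug M (matM : mat M) (twoM : forall f, f \in M -> #|f| == 2) n :
  forall N, mat N -> (forall f, f \in N -> #|f| == 2) -> #|symd M N| = n ->
  #|M| < #|N| -> exists p, augmenting (symd M N) M p.
Proof.
elim/ltn_ind: n => n IH N matN twoN hn lt.
have cM : #|cover M| <= #|M| * 2.
  by rewrite -(sum2 twoM); exact: (leq_card_cover M).1.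
have cN : #|cover N| = #|N| * 2.
  by rewrite -(sum2 twoN); apply/esym/eqP; apply: trivI_mat.
have : ~~ (cover N \subset cover M).
  apply/negP => /subset_leq_card; rewrite cN; move: cM lt; lia.
case/subsetPn => x /bigcupP [f fN xf] xM.
have cx : ~~ covered M x.
  apply/existsP => [[g /andP [gM xg]]]; apply/negP: xM; apply/negPn.
  by apply/bigcupP; exists g.
have [y yx fe] := two_other (twoN f fN) xf.
have fD : f \in symd M N.
  by rewrite /symd !inE fN (negbTE (nin_covered cx xf)) orbT.
have W : Wk M N false y [:: x].
  split => //.
  - by rewrite /= inE yx.
  - by move=> g; rewrite /= inE => /eqP ->; rewrite setUC -fe.
  - by rewrite /= setUC -fe (negbTE (nin_covered cx xf)).
have [b2 [z [r [W2 maxl]]]] := maxwalk matM matN W (leqnn _).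
case: W2 => rn u sub c alt.
case: r rn u sub c alt maxl => [|z' q] // _ u sub c alt maxl.
have e0P : [set z; z'] \in pedges [:: z, z' & q] by rewrite pedges_cons inE eqxx.
have e0D := sub _ e0P.
have ze0 : z \in [set z; z'] by rewrite !inE eqxx.
have e0b : ([set z; z'] \in M) = b2 by move: alt; rewrite pedges_cons /= => /andP [/eqP].
have HD : forall g : {set V}, g \in symd M N -> (g \in N) = ~~ (g \in M).
  by move=> g; rewrite /symd !inE; case: (g \in M); case: (g \in N).
case: b2 maxl alt e0b => maxl alt e0b; last first.
  exists (z :: z' :: q); apply: mk_aug => //.
  apply/existsP => [[g /andP [gM zg]]].
  have [w wz ge] := two_other (twoM g gM) zg.
  case gN : (g \in N).
    have e0N : [set z; z'] \in N by rewrite HD // e0b.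
    by move: e0b; rewrite -(matN _ _ _ gN e0N zg ze0) gM.
  have gD : g \in symd M N by rewrite /symd !inE gN gM.
  by move: (maxl w wz); rewrite -ge gD gM => /(_ isT).
have cz : ~~ covered N z.
  apply/existsP => [[g /andP [gN zg]]].
  have [w wz ge] := two_other (twoN g gN) zg.
  case gM : (g \in M).
    by move: (HD _ e0D); rewrite -(matM _ _ _ gM e0b zg ze0) gN gM.
  have gD : g \in symd M N by rewrite /symd !inE gN gM.
  by move: (maxl w wz); rewrite -ge gD gM => /(_ isT).
set s := pedges [:: z, z' & q].
have us : uniq s by apply: uniq_pedges.
have altN : altE N false s by apply: (altE_flip HD sub alt).
have ss : size s = (size q).+1 by rewrite /s size_pedges.
set le := nth set0 s (size q).
have leP : le \in s by apply: mem_nth; rewrite ss.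
have lin : last z' q \in le by apply: (last_edge z (r := z' :: q)).
have leD := sub _ leP.
have leN : le \in N by rewrite HD // (negbTE (nin_covered c lin)).
have lastc : forall g, g \in N -> last z' q \in g -> g \in s.
  by move=> g gN lg; rewrite (matN _ _ _ gN leN lg lin).
have matN' : mat (symd N (es [:: z, z' & q])).
  by apply: (swap_mat matN u altN lastc); rewrite /= cz.
set N' := symd N (es [:: z, z' & q]).
have oq : odd (size q).
  have := (altE_nth N false s).1 altN (size q); rewrite ss ltnSn leN /=.
  by move=> /(_ isT).
have cN' : #|N'| = #|N|.
  have := card_symd N us; rewrite -/(es _) -/N'.
  have h1 : count (mem N) s = (size s)./2 := count_altE altN.
  have h2 := count_predC (mem N) s.
  have h3 : (size s)./2 + (size s)./2 = size s.
    have := odd_double_half (size s).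
    have -> : odd (size s) = false by rewrite ss oddS oq.
    by rewrite add0n -addnn.
  have h4 : count (predC (mem N)) s = (size s)./2.
    by apply/eqP; rewrite -(eqn_add2l (size s)./2) -{1}h1 h2 h3.
  by move=> H; apply/eqP; rewrite -(eqn_add2r (count (mem N) s)) H h4 h1.
have twoN' : forall g, g \in N' -> #|g| == 2.
  move=> g; rewrite /N' /symd /es !inE => /orP [/andP [_ /twoN] //| /andP [_ gs]].
  have := sub _ gs; rewrite /symd !inE => /orP [] /andP [_] /=; [exact: twoM | exact: twoN].
have D'e : symd M N' = symd M N :\: es [:: z, z' & q].
  apply/setP => g; rewrite /N' /symd /es !in_setU !in_setD !in_set -/s.
  case gs : (g \in s); last by rewrite /=; case: (g \in M); case: (g \in N).
  by have := sub _ gs; rewrite /symd !inE; case: (g \in M); case: (g \in N).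
have ltD : #|symd M N'| < n.
  rewrite D'e cardsD -hn; have : 0 < #|symd M N :&: es [:: z, z' & q]|.
    by apply/card_gt0P; exists [set z; z']; rewrite in_setI e0D /es in_set -/s e0P.
  move: (subset_leq_card (subsetIl (symd M N) (es [:: z, z' & q]))) => h1 h2; by rewrite ltn_subrL h2 (leq_trans h2 h1).
have lt' : #|M| < #|N'| by rewrite cN'.
have [p pa] := IH _ ltD N' matN' twoN' erefl lt'.
exists p; apply: (aug_mono pa) => g /(aug_sub pa); rewrite D'e inE => /andP [] _ //.
Qed.
End S.


Section S.
Variable V : finType.
Implicit Types (A B M N G : {set {set V}}) (r p q : seq V).

Lemma multi_aug M (matM : mat M) (twoM : forall f, f \in M -> #|f| == 2) k :
  forall N, mat N -> (forall f, f \in N -> #|f| == 2) -> #|M| + k <= #|N| ->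
  exists ps : seq (seq V), [/\ size ps = k,
    forall q, q \in ps -> augmenting (symd M N) M q &
    forall X, \sum_(q <- ps) #|es q :&: X| <= #|symd M N :&: X|].
Proof.
elim: k => [|k IH] N matN twoN hk.
  by exists [::]; split => // X; rewrite big_nil.
have lt : #|M| < #|N| by rewrite -addn1 (leq_trans _ hk) // leq_add2l.
have [p pa] := exists_aug matM twoM matN twoN erefl lt.
have [z [z' [q [pe [u sub c1 c2 alt]]]]] := aug_inv pa; subst p.
set s := pedges [:: z, z' & q].
have HD : forall g : {set V}, g \in symd M N -> (g \in N) = ~~ (g \in M).
  by move=> g; rewrite /symd !inE; case: (g \in M); case: (g \in N).
have us : uniq s by apply: uniq_pedges.
have altN : altE N true s by apply: (altE_flip HD sub alt).
have ss : size s = (size q).+1 by rewrite /s size_pedges.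
set le := nth set0 s (size q).
have leP : le \in s by apply: mem_nth; rewrite ss.
have lin : last z' q \in le by apply: (last_edge z (r := z' :: q)).
have leD := sub _ leP.
have leM : le \notin M := nin_covered c2 lin.
have leN : le \in N by rewrite HD // leM.
have lastc : forall g, g \in N -> last z' q \in g -> g \in s.
  by move=> g gN lg; rewrite (matN _ _ _ gN leN lg lin).
have matN' : mat (symd N (es [:: z, z' & q])).
  by apply: (swap_mat matN u altN lastc).
set N' := symd N (es [:: z, z' & q]).
have oq : odd (size q) = false.
  have := (altE_nth M false s).1 alt (size q); rewrite ss ltnSn (negbTE leM) /=.
  by move=> /(_ isT) /esym.
have cN' : #|N'| + 1 = #|N|.
  have := card_symd N us; rewrite -/(es _) -/N'.
  have h1 : count (mem N) s = uphalf (size s) := count_altE altN.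
  have h2 := count_predC (mem N) s.
  have h3 : uphalf (size s) = (size s)./2 + 1.
    by rewrite uphalf_half ss oddS oq addnC.
  have h5 : size s = (size s)./2 + (size s)./2 + 1.
    have := odd_double_half (size s).
    have -> : odd (size s) = true by rewrite ss oddS oq.
    by rewrite -addnn addnC => ->.
  have h4 : count (predC (mem N)) s = (size s)./2.
    apply/eqP; rewrite -(eqn_add2l ((size s)./2 + 1)) -h3 -{1}h1 h2 {1}h5.
    by rewrite h3 addnAC.
  move=> H; apply/eqP; rewrite -(eqn_add2r (count (mem N) s)) -addnA (addnC 1) addnA H h4 h1 h3.
  by rewrite addnA.
have twoN' : forall g, g \in N' -> #|g| == 2.
  move=> g; rewrite /N' /symd /es !inE => /orP [/andP [_ /twoN] //| /andP [_ gs]].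
  have := sub _ gs; rewrite /symd !inE => /orP [] /andP [_] /=; [exact: twoM | exact: twoN].
have D'e : symd M N' = symd M N :\: es [:: z, z' & q].
  apply/setP => g; rewrite /N' /symd /es !in_setU !in_setD !in_set -/s.
  case gs : (g \in s); last by rewrite /=; case: (g \in M); case: (g \in N).
  by have := sub _ gs; rewrite /symd !inE; case: (g \in M); case: (g \in N).
have hk' : #|M| + k <= #|N'| by rewrite -(leq_add2r 1) -addnA cN' addn1.
have [ps [sps aps Xps]] := IH N' matN' twoN' hk'.
exists ([:: z, z' & q] :: ps); split.
- by rewrite /= sps.
- move=> q'; rewrite inE => /orP [/eqP -> //|/aps qa].
  by apply: (aug_mono qa) => g /(aug_sub qa); rewrite D'e inE => /andP [] _.
move=> X; rewrite big_cons; have := Xps X; rewrite D'e => h.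
rewrite -(cardsID (es [:: z, z' & q]) (symd M N :&: X)).
have -> : symd M N :&: X :&: es [:: z, z' & q] = es [:: z, z' & q] :&: X.
  apply/setP => g; rewrite !in_setI; case gs : (g \in es _); rewrite ?andbF //=.
  by rewrite andbT (sub g) //; move: gs; rewrite /es in_set.
have -> : symd M N :&: X :\: es [:: z, z' & q] = (symd M N :\: es [:: z, z' & q]) :&: X.
  by apply/setP => g; rewrite !in_setI !in_setD in_setI andbA.
by rewrite leq_add2l.
Qed.

End S.


Section S.
Variable V : finType.
Implicit Types (A B M N G : {set {set V}}) (r p q : seq V).

Lemma card_es p : uniq p -> #|es p| = plen p.
Proof.
move=> u; rewrite /es cardsE; have /card_uniqP -> := uniq_pedges u.
by rewrite size_pedges.
Qed.

Lemma card_esM G M p : augmenting G M p -> #|es p :&: M| = (plen p)./2.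
Proof.
move=> pa; have [z [z' [q [pe [u sub c1 c2 alt]]]]] := aug_inv pa; subst p.
have us := uniq_pedges u.
rewrite /plen -size_pedges -(count_altE alt) -size_filter.
have /card_uniqP <- := filter_uniq (mem M) us.
by apply: eq_card => f; rewrite !inE mem_filter andbC.
Qed.

Lemma aug_symd G M p : mat M -> augmenting G M p ->
  mat (symd M (es p)) /\ #|symd M (es p)| = #|M| + 1.
Proof.
move=> matM pa; have [z [z' [q [pe [u sub c1 c2 alt]]]]] := aug_inv pa; subst p.
set s := pedges [:: z, z' & q].
have lastc : forall g, g \in M -> last z' q \in g -> g \in s.
  by move=> g gM lg; move: (covered_nin c2 gM); rewrite lg.
split; first by apply: (swap_mat matM u alt lastc); rewrite /= c1.
have us : uniq s by apply: uniq_pedges.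
have ss : size s = (size q).+1 by rewrite /s size_pedges.
set le := nth set0 s (size q).
have lin : last z' q \in le by apply: (last_edge z (r := z' :: q)).
have leM : le \notin M := nin_covered c2 lin.
have oq : odd (size q) = false.
  have := (altE_nth M false s).1 alt (size q); rewrite ss ltnSn (negbTE leM) /=.
  by move=> /(_ isT) /esym.
have := card_symd M us; rewrite -/(es _).
have h1 : count (mem M) s = (size s)./2 := count_altE alt.
have h2 := count_predC (mem M) s.
have h5 : size s = (size s)./2 + (size s)./2 + 1.
  have := odd_double_half (size s).
  have -> : odd (size s) = true by rewrite ss oddS oq.
  by rewrite -addnn addnC => ->.
have h4 : count (predC (mem M)) s = (size s)./2 + 1.
  by apply/eqP; rewrite -(eqn_add2l ((size s)./2)) -{1}h1 h2 {1}h5 addnA.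
move=> H; apply/eqP; rewrite -(eqn_add2r (count (mem M) s)) H h4 h1.
by rewrite addnAC addnA.
Qed.

End S.


Section S.
Variable V : finType.
Implicit Types (A B M N G : {set {set V}}) (r p q : seq V).

Definition Inv k G M := [/\ M \subset G, mat M & forall q, augmenting G M q -> k <= plen q].

Lemma arith1 k LP LQ L1 L2 : LQ < k -> LP <= k - 1 -> L1 + L2 <= LP + LQ ->
  k <= L1 -> (LP <= L2 \/ k <= L2) -> False.
Proof. lia. Qed.

Lemma step_inv k (es0 : seq {set V}) e M M' : 2 <= k ->
  all (fun f : {set V} => #|f| == 2) (rcons es0 e) ->
  Inv k [set f in es0] M -> alg_step k [set f in rcons es0 e] M e M' ->
  Inv k [set f in rcons es0 e] M'.
Proof.
move=> k2 two [MG0 matM short] [st1 st2].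
set G := [set f in rcons es0 e]; set G0 := [set f in es0].
have G0G : G0 \subset G by apply/subsetP => f; rewrite !inE mem_rcons inE => ->; rewrite orbT.
have twoG : forall f, f \in G -> #|f| == 2 by move=> f; rewrite inE => /(allP two).
have toG0 : forall q, augmenting G M q -> e \notin pedges q -> augmenting G0 M q.
  move=> q qa en; apply: (aug_mono qa) => f fq; have := aug_sub qa fq.
  rewrite !inE mem_rcons inE => /orP [/eqP fe|//]; by move: en; rewrite -fe fq.
have MG : M \subset G := subset_trans MG0 G0G.
case: (classic (exists p, [/\ augmenting G M p, e \in pedges p & plen p <= k - 1])); last first.
  move=> nex; rewrite (st2 nex); split => // q qa; rewrite leqNgt; apply/negP => lt.
  case eq : (e \in pedges q).
    by apply: nex; exists q; split => //; move: lt k2; lia.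
  by have := short q (toG0 q qa (negbT eq)); move: lt; lia.
move=> ex; have [P [Pa eP minP M'e]] := st1 ex.
have LP : plen P <= k - 1.
  by case: ex => p0 [p0a ep0 lp0]; apply: leq_trans (minP p0 p0a ep0) lp0.
have [matM' cM'] := aug_symd matM Pa.
have M'G : M' \subset G.
  rewrite M'e; apply/subsetP => f; rewrite /symdiff in_setU !in_setD => /orP [/andP [_ fM]|/andP [_ fP]].
    by apply: (subsetP MG).
  by apply: (aug_sub Pa); move: fP; rewrite in_set.
subst M'; split => // Q Qa; rewrite leqNgt; apply/negP => LQ.
have [matM2 cM2] := aug_symd matM' Qa.
set M' := symd M (es P) in matM' cM' M'G Qa matM2 cM2.
set M2 := symd M' (es Q) in matM2 cM2.
have twoM : forall f, f \in M -> #|f| == 2 by move=> f /(subsetP MG) /twoG.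
have M2G : M2 \subset G.
  apply/subsetP => f; rewrite /M2 /symd in_setU !in_setD => /orP [/andP [_ fM]|/andP [_ fP]].
    by apply: (subsetP M'G).
  by apply: (aug_sub Qa); move: fP; rewrite /es in_set.
have twoM2 : forall f, f \in M2 -> #|f| == 2 by move=> f /(subsetP M2G) /twoG.
have hk : #|M| + 2 <= #|M2| by rewrite cM2 cM' -addnA.
have [ps [sps aps Xps]] := multi_aug matM twoM matM2 twoM2 hk.
have Dsub : symd M M2 \subset es P :|: es Q.
  apply/subsetP => f; rewrite /M2 /M' /symd !inE.
  by case: (f \in M); case: (f \in pedges P); case: (f \in pedges Q).
have DG : symd M M2 \subset G.
  apply: subset_trans Dsub _; apply/subsetP => f; rewrite in_setU => /orP [] H;
    [apply: (aug_sub Pa) | apply: (aug_sub Qa)]; by move: H; rewrite /es in_set.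
case: ps sps aps Xps => [|q1 [|q2 [|q3 ps]]] sps aps Xps; try discriminate.
have q1a : augmenting G M q1.
  have qa := aps q1 (mem_head _ _); apply: (aug_mono qa) => g /(aug_sub qa).
  exact: (subsetP DG).
have q2a : augmenting G M q2.
  have qa : augmenting (symd M M2) M q2 by apply: aps; rewrite !inE eqxx orbT.
  apply: (aug_mono qa) => g /(aug_sub qa).
  exact: (subsetP DG).
have bnd : forall q, augmenting G M q -> plen P <= plen q \/ k <= plen q.
  move=> q qa; case eq : (e \in pedges q); first by left; apply: minP.
  by right; apply: short; apply: toG0 => //; rewrite eq.
have u1 : uniq q1 by case: q1a => [[]].
have u2 : uniq q2 by case: q2a => [[]].
have uP : uniq P by case: Pa => [[]].
have uQ : uniq Q by case: Qa => [[]].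
have sumT : plen q1 + plen q2 <= plen P + plen Q.
  have := Xps setT; rewrite !big_cons big_nil !setIT addn0 !card_es //.
  move=> h; apply: (leq_trans h); apply: leq_trans (subset_leq_card Dsub) _.
  by rewrite -!card_es // cardsU leq_subr.
have nboth : (e \notin pedges q1) || (e \notin pedges q2).
  have := Xps [set e]; rewrite !big_cons big_nil addn0.
  have c1 : #|symd M M2 :&: [set e]| <= 1.
    by rewrite -(cards1 e); apply: subset_leq_card; apply: subsetIr.
  case e1 : (e \in pedges q1); case e2 : (e \in pedges q2) => //= h.
  have i1 : #|es q1 :&: [set e]| = 1.
    rewrite -(cards1 e); apply: eq_card => f; rewrite in_setI !in_set1 /es in_set.
    by case: eqP => [->|]; rewrite ?e1 ?andbF.
  have i2 : #|es q2 :&: [set e]| = 1.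
    rewrite -(cards1 e); apply: eq_card => f; rewrite in_setI !in_set1 /es in_set.
    by case: eqP => [->|]; rewrite ?e2 ?andbF.
  by move: (leq_trans h c1); rewrite i1 i2.
case/orP: nboth => en.
  have k1 := short q1 (toG0 q1 q1a en).
  exact: (arith1 LQ LP sumT k1 (bnd q2 q2a)).
have k2' := short q2 (toG0 q2 q2a en).
rewrite addnC in sumT.
exact: (arith1 LQ LP sumT k2' (bnd q1 q1a)).
Qed.

End S.


Section S.
Variable V : finType.
Implicit Types (A B M N G : {set {set V}}) (r p q : seq V).

Lemma run_inv k (es : seq {set V}) M : 2 <= k -> alg_run k es M ->
  all (fun f : {set V} => #|f| == 2) es -> Inv k [set f in es] M.
Proof.
move=> k2; elim => [|es0 e M0 M' run IH st] two.
  split; first by apply: sub0set.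
    by move=> f g v; rewrite inE.
  move=> q /aug_inv [z [z' [q' [-> [_ sub _ _ _]]]]].
  by have := sub [set z; z']; rewrite pedges_cons inE eqxx inE => /(_ isT).
have two0 : all (fun f : {set V} => #|f| == 2) es0 by move: two; rewrite all_rcons => /andP [].
exact: (step_inv k2 two (IH two0) st).
Qed.

Lemma sum_ge (ps : seq (seq V)) (F : seq V -> nat) c :
  (forall q, q \in ps -> c <= F q) -> size ps * c <= \sum_(q <- ps) F q.
Proof.
elim: ps => [|q ps IH] H; first by rewrite big_nil.
rewrite big_cons /= mulSn leq_add //; first by apply: H; rewrite inE eqxx.
by apply: IH => q' qi; apply: H; rewrite inE qi orbT.
Qed.

Lemma arith2 (h m n r : nat) : n = m + r -> r * h <= m -> h * 2 * n <= (h * 2 + 2) * m.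
Proof. move=> -> H; nia. Qed.

Lemma final_bound k (ess : seq {set V}) M : 2 <= k -> ~~ odd k ->
  all (fun f : {set V} => #|f| == 2) ess -> Inv k [set f in ess] M ->
  k * OPT [set f in ess] <= (k + 2) * #|M|.
Proof.
move=> k2 kev two [MG matM short].
set G := [set f in ess].
have twoG : forall f, f \in G -> #|f| == 2 by move=> f; rewrite inE => /(allP two).
have twoM : forall f, f \in M -> #|f| == 2 by move=> f /(subsetP MG) /twoG.
have key : forall N, is_matching G N -> k * #|N| <= (k + 2) * #|M|.
  move=> N /matP [NG matN].
  have twoN : forall f, f \in N -> #|f| == 2 by move=> f /(subsetP NG) /twoG.
  case: (leqP #|N| #|M|) => hNM.
    by apply: leq_trans (leq_mul (leqnn k) hNM) _; rewrite leq_mul2r leq_addr orbT.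
  have hk : #|M| + (#|N| - #|M|) <= #|N| by rewrite subnKC // ltnW.
  have [ps [sps aps Xps]] := multi_aug matM twoM matN twoN hk.
  have DG : symd M N \subset G.
    apply/subsetP => f; rewrite /symd in_setU !in_setD => /orP [] /andP [_ fi].
      exact: (subsetP MG).
    exact: (subsetP NG).
  have lb : forall q, q \in ps -> k./2 <= #|es q :&: M|.
    move=> q qi; have qa := aps q qi; rewrite (card_esM qa).
    have : k <= plen q.
      by apply: short; apply: (aug_mono qa) => g /(aug_sub qa); apply: (subsetP DG).
    move=> h; rewrite -!divn2; exact: leq_div2r.
  have := sum_ge lb; rewrite sps => h1.
  have h2 := leq_trans h1 (Xps M).
  have h3 : #|symd M N :&: M| <= #|M| by apply: subset_leq_card; apply: subsetIr.
  have hk2 : k = k./2 * 2.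
    by have := odd_double_half k; rewrite (negbTE kev) add0n -muln2.
  rewrite hk2; apply: (arith2 (r := #|N| - #|M|)); first by rewrite subnKC // ltnW.
  exact: leq_trans h2 h3.
rewrite /OPT; apply: (big_ind (fun x => k * x <= (k + 2) * #|M|)) => //.
  by rewrite muln0.
move=> x y hx hy; rewrite /maxn; by case: ifP.
Qed.

End S.

Unset Implicit Arguments.
Import GRing.Theory Num.Theory.
Local Open Scope ring_scope.

Theorem theorem5 (V : finType) (k : nat) :
  (2 <= k)%N -> ~~ odd k ->
  forall es : seq {set V}, uniq es -> all (fun e : {set V} => #|e| == 2%N) es ->
  forall M : {set {set V}}, alg_run k es M ->
  (1 - 2 / (k + 2)%:R) * (OPT [set f in es])%:R <= (#|M|%:R : rat).
Proof.
move=> k2 kev es ues two M run.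
have H := final_bound k2 kev two (run_inv k2 run two).
have nz : ((k + 2)%:R : rat) != 0 by rewrite pnatr_eq0 addn2.
have pz : (0 : rat) < (k + 2)%:R by rewrite ltr0n addn2.
have -> : (1 - 2 / (k + 2)%:R : rat) = k%:R / (k + 2)%:R.
  rewrite natrD; field; by rewrite -natrD.
rewrite mulrAC ler_pdivrMr // -!natrM ler_nat [X in (_ <= X)%N]mulnC.
by move: H; rewrite mulnC.
Qed.
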